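(* Let $k$ be an odd positive integer, $s>0$ an integer and $t$ an integer. Then $$\eta_{k}(t;s)=\frac{1}{2}\sum_{j=0}^{k-1}(-1)^{j}\,\eta_{k}(t-js;s+1).$$
   Context: For positive integers $k,s$ and integer $t$, $\eta_{k}(t;s)=\frac{1}{k}\sum_{j=0}^{k-1}(1+\alpha^{j})(1+\alpha^{2j})\cdots (1+\alpha^{(s-1)j})\,\alpha^{-jt}$, where $\alpha=e^{2\pi i/k}$ (the empty product for $s=1$ equals $1$). *)

(* Defs.v *)
From HB Require Import structures.
From mathcomp Require Import all_boot all_order all_algebra.
From mathcomp Require Import reals trigo.
From mathcomp Require Import complex.
Set Implicit Arguments. Unset Strict Implicit. Unset Printing Implicit Defensive.
Import Order.TTheory GRing.Theory Num.Theory.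
Local Open Scope ring_scope.
Local Open Scope complex_scope.

Definition alpha (R : realType) (k : nat) : R[i] :=
  (cos (2 * pi / k%:R)) +i* (sin (2 * pi / k%:R)).

Definition etak (R : realType) (k : nat) (t : int) (s : nat) : R[i] :=
  (k%:R)^-1 * \sum_(j < k)
     ((\prod_(1 <= m < s) (1 + alpha R k ^+ (m * j))) * alpha R k ^ (- (j%:Z * t))).

(* Main.v *)
Require Import Defs.
From HB Require Import structures.
From mathcomp Require Import all_boot all_order all_algebra.
From mathcomp Require Import reals trigo.
From mathcomp Require Import complex.
From mathcomp Require Import ring.
Import Order.TTheory GRing.Theory Num.Theory.
Local Open Scope ring_scope.
Local Open Scope complex_scope.

Lemma geomk (F : fieldType) (x : F) (k : nat) : odd k -> x ^+ k = 1 ->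
  (1 + x) * \sum_(j < k) (-1) ^+ j * x ^+ j = 2.
Proof.
move=> ok xk.
have := subrXX 1 (- x) k.
rewrite expr1n exprNn -signr_odd ok expr1 xk => H; rewrite (_ : 2 = 1 - (-1) * 1); last by ring. rewrite H.
rewrite [in RHS]addrC; congr (_ * _).
  by rewrite opprK addrC.
apply: (eq_bigr _) => i _.
by rewrite expr1n mul1r [RHS]exprNn.
Qed.

Lemma expz_split (F : fieldType) (a : F) (l j s : nat) (t : int) : a != 0 ->
  a ^ (- (l%:Z * (t - j%:Z * s%:Z))) = a ^ (- (l%:Z * t)) * (a ^+ (s * l)) ^+ j.
Proof.
move=> a0.
have -> : - (l%:Z * (t - j%:Z * s%:Z)) = - (l%:Z * t) + ((s * l * j)%N)%:Z.
  rewrite !PoszM; ring.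
by rewrite expfzDr // -exprM.
Qed.
Lemma demoivre (R : realType) (x : R) (n : nat) :
  ((cos x) +i* (sin x)) ^+ n = (cos (x *+ n)) +i* (sin (x *+ n)).
Proof.
elim: n => [|n IH]; first by rewrite !mulr0n cos0 sin0.
rewrite exprS IH mulrS cosD sinD.
rewrite [LHS]/GRing.mul /=. congr (_ +i* _); ring.
Qed.

Lemma alphak (R : realType) (k : nat) : (0 < k)%N -> alpha R k ^+ k = 1.
Proof.
move=> k0; rewrite /alpha demoivre.
have -> : 2 * pi / k%:R *+ k = pi *+ 2 :> R.
  rewrite -mulr_natr mulfVK ?pnatr_eq0 -?lt0n // mulr_natl //.
by rewrite cos2pi sin2pi.
Qed.

Theorem theorem3p6 (R : realType) (k s : nat) (t : int) :
  odd k -> (0 < s)%N ->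
  etak R k t s =
  2^-1 * \sum_(j < k) (-1) ^+ j * etak R k (t - j%:Z * s%:Z) s.+1.
Proof.
move=> ok s0.
have k0 : (0 < k)%N by case: k ok.
have ak := alphak R k k0.
set a := alpha R k in ak *.
have a0 : a != 0.
  apply/eqP => a0; move: ak; rewrite a0 expr0n; move: k0; case: (k) => //.
  by move=> n _ /eqP; rewrite eq_sym oner_eq0.
rewrite /etak -/a.
have H : forall l : 'I_k, \sum_(j < k) (-1) ^+ j *
    ((\prod_(1 <= m < s.+1) (1 + a ^+ (m * l))) * a ^ (- (l%:Z * (t - j%:Z * s%:Z))))
  = 2 * ((\prod_(1 <= m < s) (1 + a ^+ (m * l))) * a ^ (- (l%:Z * t))).
  move=> l.
  rewrite big_nat_recr //=.
  set P := \prod_(1 <= m < s) _.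
  set x := a ^+ (s * l).
  set A := a ^ (- (l%:Z * t)).
  rewrite (eq_bigr (fun j : 'I_k => (P * A) * ((1 + x) * ((-1) ^+ j * x ^+ j)))); last first.
    move=> j _; rewrite expz_split // -/A -/x; move: ((-1) ^+ j) (x ^+ j) => u v; ring.
  rewrite -big_distrr /= -big_distrr /= (@geomk _ x k ok); first ring.
  by rewrite /x -exprM mulnC exprM ak expr1n.
under [in RHS]eq_bigr => j _ do rewrite mulrCA big_distrr /=.
rewrite -big_distrr /= exchange_big /=.
rewrite (eq_bigr _ (fun l _ => H l)) -big_distrr /=.
by rewrite mulrCA mulKf // pnatr_eq0.
Qed.
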